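(* Let $A\in\mathbb{R}^{n\times n}$ be Metzler, $J\in\mathbb{R}^{n\times n}$ be nonnegative and $0<T_{min}\le T_{max}<\infty$. The following statements are equivalent: (a) There exist $\lambda,\mu\in\mathbb{R}^n_{>0}$ such that, with $V(x)=\lambda^\top x$, $V(e^{A\theta}Jx)-V(x)\le-\mu^\top x$ for all $x\in\mathbb{R}^n_{\ge0}$ and all $\theta\in[T_{min},T_{max}]$ (i.e. $V(x(t_{k+1}))-V(x(t_k))\le-\mu^\top x(t_k)$ along trajectories with $T_k\in[T_{min},T_{max}]$). (b) There exists $\lambda\in\mathbb{R}^n_{>0}$ such that $\lambda^\top(e^{A\theta}J-I_n)<0$ for all $\theta\in[T_{min},T_{max}]$. (c) There exist a differentiable $\zeta:[0,T_{max}]\to\mathbb{R}^n$ with $\zeta(0)\in\mathbb{R}^n_{>0}$ and $\varepsilon>0$ such that $\zeta(\tau)^\top A-\dot\zeta(\tau)^\top\le0$ for all $\tau\in[0,T_{max}]$ and $\zeta(\theta)^\top J-\zeta(0)^\top+\varepsilon\mathbf{1}_n^\top\le0$ for all $\theta\in[T_{min},T_{max}]$.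
   Context: Consider the linear impulsive system $\dot x(t)=Ax(t)$ for $t\neq t_k$, $x(t_k^+)=Jx(t_k)$, $x(t_0)=x_0$, where $x(t)\in\mathbb{R}^n$, $x(t^+):=\lim_{s\downarrow t}x(s)$ (left-continuous trajectories), and the impulse times are strictly increasing with $t_k\to\infty$; $T_k:=t_{k+1}-t_k$. A matrix is Metzler if its off-diagonal entries are nonnegative and nonnegative if all entries are nonnegative. Vector inequalities are componentwise; $\mathbf{1}_n$ is the vector of ones. *)

(* Defs.v *)
(* classical reals. Matrices are nat -> nat -> R, vectors nat -> R,
   only entries with indices < n are meaningful. *)
From Stdlib Require Import Arith Reals Lra Lia ClassicalEpsilon.
Open Scope R_scope.

Definition Mat := nat -> nat -> R.
Definition Vec := nat -> R.

Fixpoint fsum (n : nat) (f : nat -> R) : R :=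
  match n with O => 0 | S k => fsum k f + f k end.

Definition idm : Mat := fun i j => if Nat.eq_dec i j then 1 else 0.

Definition mmul (n : nat) (A B : Mat) : Mat :=
  fun i j => fsum n (fun k => A i k * B k j).

Definition msub (A B : Mat) : Mat := fun i j => A i j - B i j.

Fixpoint mpow (n : nat) (A : Mat) (k : nat) : Mat :=
  match k with O => idm | S k' => mmul n A (mpow n A k') end.

Definition mvec (n : nat) (M : Mat) (x : Vec) : Vec :=
  fun i => fsum n (fun k => M i k * x k).

Definition vmat (n : nat) (v : Vec) (M : Mat) : Vec :=
  fun j => fsum n (fun i => v i * M i j).

Definition dot (n : nat) (v x : Vec) : R := fsum n (fun i => v i * x i).

(* Matrix exponential e^{A t}: entrywise sum of the series sum_k t^k/k! (A^k)_{ij}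
   (chosen by epsilon; the series always converges). *)
Definition expm (n : nat) (A : Mat) (t : R) : Mat :=
  fun i j => epsilon (inhabits 0)
    (fun l => infinite_sum (fun k => t ^ k / INR (Factorial.fact k) * mpow n A k i j) l).

Definition Metzler (n : nat) (A : Mat) : Prop :=
  forall i j, (i < n)%nat -> (j < n)%nat -> i <> j -> 0 <= A i j.

Definition nonneg_mat (n : nat) (M : Mat) : Prop :=
  forall i j, (i < n)%nat -> (j < n)%nat -> 0 <= M i j.

Definition pos_vec (n : nat) (v : Vec) : Prop := forall i, (i < n)%nat -> 0 < v i.
Definition nonneg_vec (n : nat) (v : Vec) : Prop := forall i, (i < n)%nat -> 0 <= v i.

(* Main.v *)
From Coquelicot Require Import Coquelicot.
Require Import Defs.
From Stdlib Require Import Reals Lra Lia ClassicalEpsilon.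
Open Scope R_scope.

Lemma fsum_ext n f g : (forall k, (k < n)%nat -> f k = g k) -> fsum n f = fsum n g.
Proof. induction n; simpl; intros H; auto. rewrite IHn; [rewrite H|]; auto; intros; apply H; lia. Qed.

Lemma fsum_plus n f g : fsum n (fun k => f k + g k) = fsum n f + fsum n g.
Proof. induction n; simpl; [lra|]. rewrite IHn; lra. Qed.

Lemma fsum_minus n f g : fsum n (fun k => f k - g k) = fsum n f - fsum n g.
Proof. induction n; simpl; [lra|]. rewrite IHn; lra. Qed.

Lemma fsum_scal n c f : fsum n (fun k => c * f k) = c * fsum n f.
Proof. induction n; simpl; [lra|]. rewrite IHn; lra. Qed.

Lemma fsum_scal_r n c f : fsum n (fun k => f k * c) = fsum n f * c.
Proof. induction n; simpl; [lra|]. rewrite IHn; lra. Qed.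

Lemma fsum_zero n : fsum n (fun _ => 0) = 0.
Proof. induction n; simpl; [lra|]. rewrite IHn; lra. Qed.

Lemma fsum_swap n m (f : nat -> nat -> R) :
  fsum n (fun i => fsum m (fun j => f i j)) = fsum m (fun j => fsum n (fun i => f i j)).
Proof.
  induction n; simpl. { symmetry; apply fsum_zero. }
  rewrite IHn, <- fsum_plus. reflexivity.
Qed.

Lemma fsum_le n f g : (forall k, (k < n)%nat -> f k <= g k) -> fsum n f <= fsum n g.
Proof. induction n; simpl; intros H; [lra|]. assert (f n <= g n) by (apply H; lia).
  assert (fsum n f <= fsum n g) by (apply IHn; intros; apply H; lia). lra. Qed.

Lemma fsum_lt n f g : (0 < n)%nat -> (forall k, (k < n)%nat -> f k < g k) -> fsum n f < fsum n g.
Proof. destruct n as [|n]; [lia|]. intros _ H; simpl.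
  assert (f n < g n) by (apply H; lia).
  assert (fsum n f <= fsum n g) by (apply fsum_le; intros; left; apply H; lia). lra. Qed.

Lemma fsum_nonneg n f : (forall k, (k < n)%nat -> 0 <= f k) -> 0 <= fsum n f.
Proof. intros H. rewrite <- (fsum_zero n). apply fsum_le; auto. Qed.

Lemma fsum_abs n f : Rabs (fsum n f) <= fsum n (fun k => Rabs (f k)).
Proof. induction n; simpl. { rewrite Rabs_R0; lra. }
  eapply Rle_trans; [apply Rabs_triang|]. lra. Qed.

Lemma fsum_const n c : fsum n (fun _ => c) = INR n * c.
Proof. induction n; [simpl; lra|]. cbn [fsum]. rewrite IHn, S_INR; lra. Qed.

Lemma fsum_term_le n f k : (k < n)%nat -> (forall i, (i < n)%nat -> 0 <= f i) -> f k <= fsum n f.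
Proof. induction n; intros Hk H; [lia|]. simpl.
  destruct (Nat.eq_dec k n).
  - subst. assert (0 <= fsum n f) by (apply fsum_nonneg; intros; apply H; lia). lra.
  - assert (f k <= fsum n f) by (apply IHn; [lia| intros; apply H; lia]).
    assert (0 <= f n) by (apply H; lia). lra.
Qed.

Lemma fsum_delta_l n i f : (i < n)%nat -> fsum n (fun k => idm i k * f k) = f i.
Proof. induction n; intros Hi; [lia|]. simpl. unfold idm at 2.
  destruct (Nat.eq_dec i n).
  - subst. rewrite (fsum_ext _ _ (fun _ => 0)). { rewrite fsum_zero; lra. }
    intros k Hk. unfold idm. destruct (Nat.eq_dec n k); [lia|lra].
  - rewrite IHn by lia. lra.
Qed.

Lemma fsum_delta_r n j f : (j < n)%nat -> fsum n (fun k => f k * idm k j) = f j.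
Proof. intros Hj. rewrite <- (fsum_delta_l n j f Hj). apply fsum_ext; intros k _.
  unfold idm. destruct (Nat.eq_dec k j), (Nat.eq_dec j k); subst; try lra; congruence. Qed.

Lemma mpow_S_r n B k i j : (i < n)%nat -> (j < n)%nat ->
  mpow n B (S k) i j = fsum n (fun l => mpow n B k i l * B l j).
Proof.
  revert i j; induction k; intros i j Hi Hj.
  - simpl. unfold mmul. rewrite fsum_delta_r by auto. rewrite fsum_delta_l by auto. reflexivity.
  - change (mpow n B (S (S k)) i j) with (fsum n (fun l => B i l * mpow n B (S k) l j)).
    rewrite (fsum_ext _ _ (fun l => B i l * fsum n (fun m => mpow n B k l m * B m j))).
    2:{ intros l Hl. rewrite IHk; auto. }
    rewrite (fsum_ext _ (fun l => B i l * fsum n (fun m => mpow n B k l m * B m j))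
                        (fun l => fsum n (fun m => B i l * mpow n B k l m * B m j))).
    2:{ intros l _. rewrite <- fsum_scal. apply fsum_ext; intros; ring. }
    rewrite fsum_swap. apply fsum_ext; intros m _.
    simpl. unfold mmul. rewrite <- fsum_scal_r. reflexivity.
Qed.

Definition coef n (B : Mat) i j k := mpow n B k i j / INR (Factorial.fact k).
Definition bnd n (B : Mat) := INR n * fsum n (fun a => fsum n (fun b => Rabs (B a b))) + 1.

Lemma entry_le n (B : Mat) a b : (a < n)%nat -> (b < n)%nat ->
  Rabs (B a b) <= fsum n (fun a => fsum n (fun b => Rabs (B a b))).
Proof.
  intros Ha Hb.
  eapply Rle_trans; [| apply (fsum_term_le n (fun a => fsum n (fun b => Rabs (B a b))) a Ha)].
  - apply (fsum_term_le n (fun b => Rabs (B a b)) b Hb). intros; apply Rabs_pos.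
  - intros; apply fsum_nonneg; intros; apply Rabs_pos.
Qed.

Lemma bnd_pos n B : 1 <= bnd n B.
Proof. unfold bnd. assert (0 <= INR n) by apply pos_INR.
  assert (0 <= fsum n (fun a => fsum n (fun b => Rabs (B a b)))).
  { apply fsum_nonneg; intros; apply fsum_nonneg; intros; apply Rabs_pos. }
  nra. Qed.

Lemma mpow_bound n B k i j : (i < n)%nat -> (j < n)%nat ->
  Rabs (mpow n B k i j) <= bnd n B ^ k.
Proof.
  revert i j; induction k; intros i j Hi Hj.
  - simpl. unfold idm. destruct (Nat.eq_dec i j); rewrite ?Rabs_R1, ?Rabs_R0; lra.
  - change (mpow n B (S k) i j) with (fsum n (fun l => B i l * mpow n B k l j)).
    set (M := fsum n (fun a => fsum n (fun b => Rabs (B a b)))).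
    assert (HM : 0 <= M) by (apply fsum_nonneg; intros; apply fsum_nonneg; intros; apply Rabs_pos).
    assert (HK : 0 <= bnd n B ^ k) by (apply pow_le; pose proof (bnd_pos n B); lra).
    eapply Rle_trans; [apply fsum_abs|].
    eapply Rle_trans; [apply (fsum_le _ _ (fun _ => M * bnd n B ^ k))|].
    + intros l Hl. rewrite Rabs_mult. apply Rmult_le_compat; try apply Rabs_pos.
      * apply entry_le; auto.
      * apply IHk; auto.
    + rewrite fsum_const. simpl.
      assert (INR n * M <= bnd n B) by (unfold bnd; fold M; lra).
      assert (0 <= INR n) by apply pos_INR. nra.
Qed.

Lemma coef_cv n B i j r : (i < n)%nat -> (j < n)%nat -> CV_disk (coef n B i j) r.
Proof.
  intros Hi Hj. unfold CV_disk.
  apply (@ex_series_le R_AbsRing R_CompleteNormedModule _ (fun k => (bnd n B * Rabs r) ^ k / INR (Factorial.fact k))).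
  - intros k. unfold norm; simpl. unfold abs; simpl. rewrite Rabs_Rabsolu.
    unfold coef. rewrite Rabs_mult, Rabs_div by apply INR_fact_neq_0.
    rewrite (Rabs_right (INR _)) by (left; apply INR_fact_lt_0).
    rewrite <- RPow_abs, Rpow_mult_distr.
    unfold Rdiv. pose proof (INR_fact_lt_0 k).
    assert (0 < / INR (Factorial.fact k)) by (apply Rinv_0_lt_compat; auto).
    pose proof (mpow_bound n B k i j Hi Hj).
    assert (0 <= Rabs r ^ k) by (apply pow_le, Rabs_pos).
    assert (0 <= Rabs (mpow n B k i j)) by apply Rabs_pos.
    apply (Rle_trans _ (bnd n B ^ k * / INR (Factorial.fact k) * Rabs r ^ k)); [|right; ring].
    apply Rmult_le_compat_r; auto. apply Rmult_le_compat_r; lra.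
  - pose proof (is_exp_Reals (bnd n B * Rabs r)) as H.
    eexists. apply (is_series_ext _ _ _ ) with (2 := H). intros k.
    rewrite pow_n_pow. unfold scal; simpl. unfold mult; simpl. unfold Rdiv. ring.
Qed.

Lemma coef_radius n B i j x : (i < n)%nat -> (j < n)%nat ->
  Rbar_lt (Rabs x) (CV_radius (coef n B i j)).
Proof.
  intros Hi Hj. destruct (Lub_Rbar_correct (CV_disk (coef n B i j))) as [Hub _].
  specialize (Hub (Rabs x + 1) (coef_cv n B i j _ Hi Hj)).
  unfold CV_radius. destruct (Lub_Rbar (CV_disk (coef n B i j))); simpl in *; auto. lra.
Qed.

Lemma expm_eq n B t i j : (i < n)%nat -> (j < n)%nat ->
  expm n B t i j = PSeries (coef n B i j) t.
Proof.
  intros Hi Hj.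
  assert (Hs : infinite_sum (fun k => t ^ k / INR (Factorial.fact k) * mpow n B k i j)
                  (PSeries (coef n B i j) t)).
  { apply is_series_Reals. pose proof (PSeries_correct _ _ (CV_radius_inside _ _ (coef_radius n B i j t Hi Hj))) as H.
    apply (is_series_ext _ _ _) with (2 := H). intros k. rewrite pow_n_pow.
    unfold scal; simpl. unfold mult; simpl. unfold coef, Rdiv. ring. }
  unfold expm. apply (uniqueness_sum (fun k => t ^ k / INR (Factorial.fact k) * mpow n B k i j)); auto.
  apply epsilon_spec. exists (PSeries (coef n B i j) t). exact Hs.
Qed.

Lemma is_series_zero : is_series (fun _ : nat => 0) 0.
Proof.
  pose proof (is_series_scal_l 0 _ _ (is_series_geom (1/2) ltac:(rewrite Rabs_right; lra))) as G.
  unfold scal in G; simpl in G; unfold mult in G; simpl in G.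
  rewrite Rmult_0_l in G. apply (is_series_ext _ _ _) with (2 := G). intros k. apply Rmult_0_l. Qed.

Lemma pseries_fsum (m : nat) (c : nat -> R) (a : nat -> nat -> R) x (v : nat -> R) :
  (forall l, (l < m)%nat -> is_pseries (a l) x (v l)) ->
  is_pseries (fun k => fsum m (fun l => c l * a l k)) x (fsum m (fun l => c l * v l)).
Proof.
  induction m; intros H; simpl.
  - unfold is_pseries. apply (is_series_ext _ _ _) with (2 := is_series_zero).
    intros k. unfold scal; simpl. unfold mult; simpl. ring.
  - assert (H1 : is_pseries (fun k => fsum m (fun l => c l * a l k)) x (fsum m (fun l => c l * v l)))
      by (apply IHm; intros; apply H; lia).
    assert (H2 : is_pseries (PS_scal (c m) (a m)) x (scal (c m) (v m))).
    { apply (@is_pseries_scal R_AbsRing R_NormedModule). { unfold mult; simpl; apply Rmult_comm. } apply H; lia. }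
    pose proof (is_pseries_plus _ _ _ _ _ H1 H2) as H3.
    unfold is_pseries in *. apply (is_series_ext _ _ _) with (2 := H3).
    intros k. unfold PS_plus, PS_scal, scal, plus; simpl. unfold mult; simpl. ring.
Qed.

Lemma expm_is_pseries n B t i j : (i < n)%nat -> (j < n)%nat ->
  is_pseries (coef n B i j) t (expm n B t i j).
Proof. intros Hi Hj. rewrite expm_eq by auto.
  apply PSeries_correct, CV_radius_inside, coef_radius; auto. Qed.

Lemma PS_derive_coef n B i j k :
  PS_derive (coef n B i j) k = mpow n B (S k) i j / INR (Factorial.fact k).
Proof. unfold PS_derive, coef. rewrite fact_simpl, mult_INR.
  pose proof (INR_fact_neq_0 k). assert (INR (S k) <> 0) by (apply not_0_INR; lia).
  field; auto. Qed.

Lemma expm_deriv_l n B i j t : (i < n)%nat -> (j < n)%nat ->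
  derivable_pt_lim (fun s => expm n B s i j) t (fsum n (fun l => B i l * expm n B t l j)).
Proof.
  intros Hi Hj. apply is_derive_Reals.
  apply (is_derive_ext (PSeries (coef n B i j))). { intros s; symmetry; apply expm_eq; auto. }
  replace (fsum n (fun l => B i l * expm n B t l j)) with (PSeries (PS_derive (coef n B i j)) t).
  { apply is_derive_PSeries, coef_radius; auto. }
  rewrite (PSeries_ext _ (fun k => fsum n (fun l => B i l * coef n B l j k))).
  - apply is_pseries_unique, pseries_fsum. intros l Hl. apply expm_is_pseries; auto.
  - intros k. rewrite PS_derive_coef. change (mpow n B (S k) i j) with (fsum n (fun l => B i l * mpow n B k l j)).
    unfold Rdiv. rewrite <- fsum_scal_r. apply fsum_ext; intros. unfold coef. unfold Rdiv. ring.
Qed.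

Lemma expm_deriv_r n B i j t : (i < n)%nat -> (j < n)%nat ->
  derivable_pt_lim (fun s => expm n B s i j) t (fsum n (fun l => expm n B t i l * B l j)).
Proof.
  intros Hi Hj. apply is_derive_Reals.
  apply (is_derive_ext (PSeries (coef n B i j))). { intros s; symmetry; apply expm_eq; auto. }
  replace (fsum n (fun l => expm n B t i l * B l j)) with (PSeries (PS_derive (coef n B i j)) t).
  { apply is_derive_PSeries, coef_radius; auto. }
  rewrite (PSeries_ext _ (fun k => fsum n (fun l => B l j * coef n B i l k))).
  - rewrite (fsum_ext _ _ (fun l => B l j * expm n B t i l)) by (intros; ring).
    apply is_pseries_unique, pseries_fsum. intros l Hl. apply expm_is_pseries; auto.
  - intros k. rewrite PS_derive_coef. rewrite mpow_S_r by auto.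
    unfold Rdiv. rewrite <- fsum_scal_r. apply fsum_ext; intros. unfold coef. unfold Rdiv. ring.
Qed.

Lemma expm_0 n B i j : (i < n)%nat -> (j < n)%nat -> expm n B 0 i j = idm i j.
Proof. intros Hi Hj. rewrite expm_eq, PSeries_0 by auto. unfold coef. simpl. field. Qed.

Lemma expm_cont n B i j t : (i < n)%nat -> (j < n)%nat -> continuity_pt (fun s => expm n B s i j) t.
Proof. intros Hi Hj. apply derivable_continuous_pt.
  exists (fsum n (fun l => B i l * expm n B t l j)). apply expm_deriv_l; auto. Qed.

Lemma dfsum m (f : nat -> R -> R) (d : nat -> R) x :
  (forall l, (l < m)%nat -> derivable_pt_lim (f l) x (d l)) ->
  derivable_pt_lim (fun s => fsum m (fun l => f l s)) x (fsum m d).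
Proof.
  induction m; intros H; simpl.
  - apply derivable_pt_lim_const.
  - apply (derivable_pt_lim_plus (fun s => fsum m (fun l => f l s)) (f m)).
    + apply IHm; intros; apply H; lia.
    + apply H; lia.
Qed.

Lemma dmult f g x lf lg : derivable_pt_lim f x lf -> derivable_pt_lim g x lg ->
  derivable_pt_lim (fun s => f s * g s) x (lf * g x + f x * lg).
Proof. intros; apply (derivable_pt_lim_mult f g); auto. Qed.

Lemma drefl f t s l : derivable_pt_lim f (t - s) l -> derivable_pt_lim (fun u => f (t - u)) s (- l).
Proof.
  intros H. apply is_derive_Reals. apply is_derive_Reals in H.
  pose proof (is_derive_comp f (fun u => t - u) s l (-1) H) as H2.
  replace (-l) with (scal (-1) l) by (unfold scal; simpl; unfold mult; simpl; ring).
  apply H2. auto_derive; try (auto; ring).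
Qed.

Lemma dexp c u : derivable_pt_lim (fun u => exp (- c * u)) u (- c * exp (- c * u)).
Proof. apply is_derive_Reals. auto_derive; auto. ring. Qed.

Section Pos.
Variables (n : nat) (A : Mat).
Hypothesis hA : Metzler n A.

Let c := fsum n (fun a => fsum n (fun b => Rabs (A a b))).
Let B : Mat := fun a b => A a b + c * idm a b.

Lemma B_nonneg i l : (i < n)%nat -> (l < n)%nat -> 0 <= B i l.
Proof.
  intros Hi Hl. unfold B, idm. destruct (Nat.eq_dec i l).
  - subst. pose proof (entry_le n A l l Hl Hl). fold c in H.
    pose proof (Rle_abs (- A l l)). rewrite Rabs_Ropp in H0. lra.
  - rewrite Rmult_0_r, Rplus_0_r. apply hA; auto.
Qed.

Lemma mpowB_nonneg k i j : (i < n)%nat -> (j < n)%nat -> 0 <= mpow n B k i j.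
Proof.
  revert i j; induction k; intros i j Hi Hj.
  - simpl. unfold idm. destruct (Nat.eq_dec i j); lra.
  - simpl. unfold mmul. apply fsum_nonneg. intros l Hl.
    apply Rmult_le_pos; [apply B_nonneg| apply IHk]; auto.
Qed.

Lemma sum_n_nonneg (a : nat -> R) : (forall k, 0 <= a k) -> forall m, 0 <= sum_n a m.
Proof. intros H m. induction m.
  - rewrite sum_O. apply H.
  - rewrite sum_Sn. unfold plus; simpl. pose proof (H (S m)). lra.
Qed.

Lemma expmB_nonneg t i j : 0 <= t -> (i < n)%nat -> (j < n)%nat -> 0 <= expm n B t i j.
Proof.
  intros Ht Hi Hj. pose proof (expm_is_pseries n B t i j Hi Hj) as H.
  unfold is_pseries in H.
  assert (Hl : is_lim_seq (sum_n (fun k => scal (pow_n t k) (coef n B i j k))) (expm n B t i j)) by exact H.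
  assert (Hk : forall k, 0 <= scal (pow_n t k) (coef n B i j k)).
  { intros k. unfold scal; simpl. unfold mult; simpl. rewrite pow_n_pow.
    apply Rmult_le_pos; [apply pow_le; auto|]. unfold coef, Rdiv. apply Rmult_le_pos.
    - apply mpowB_nonneg; auto.
    - left; apply Rinv_0_lt_compat, INR_fact_lt_0. }
  pose proof (is_lim_seq_le (fun _ => 0) _ 0 _ (sum_n_nonneg _ Hk) (is_lim_seq_const 0) Hl). simpl in H0. exact H0.
Qed.

Let Q u i j := exp (- c * u) * expm n B u i j.

Lemma Q_deriv u i j : (i < n)%nat -> (j < n)%nat ->
  derivable_pt_lim (fun s => Q s i j) u (fsum n (fun l => A i l * Q u l j)).
Proof.
  intros Hi Hj. unfold Q.
  replace (fsum n (fun l => A i l * (exp (- c * u) * expm n B u l j))) with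
    ((- c * exp (- c * u)) * expm n B u i j + exp (- c * u) * fsum n (fun l => B i l * expm n B u l j)).
  { apply (dmult (fun s => exp (- c * s)) (fun s => expm n B s i j)); [apply dexp | apply expm_deriv_l; auto]. }
  rewrite (fsum_ext _ (fun l => B i l * expm n B u l j) (fun l => A i l * expm n B u l j + c * (idm i l * expm n B u l j)))
    by (intros; unfold B; cbv beta; rewrite Rmult_plus_distr_r, Rmult_assoc; reflexivity).
  rewrite fsum_plus, fsum_scal, fsum_delta_l by auto.
  rewrite (fsum_ext _ (fun l => A i l * (exp (- c * u) * expm n B u l j)) (fun l => exp (- c * u) * (A i l * expm n B u l j))) by (intros; ring).
  rewrite fsum_scal. ring.
Qed.

Lemma Q_0 i j : (i < n)%nat -> (j < n)%nat -> Q 0 i j = idm i j.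
Proof. intros. unfold Q. rewrite expm_0 by auto. rewrite Rmult_0_r, exp_0. ring. Qed.

Lemma expm_eq_Q t i j : 0 <= t -> (i < n)%nat -> (j < n)%nat -> expm n A t i j = Q t i j.
Proof.
  intros Ht Hi Hj. destruct Ht as [Ht|Ht]; [| subst; rewrite Q_0, expm_0; auto].
  set (H := fun s => fsum n (fun l => expm n A s i l * Q (t - s) l j)).
  assert (HD : forall s, derivable_pt_lim H s 0).
  { intros s. unfold H.
    replace 0 with (fsum n (fun l => fsum n (fun m => expm n A s i m * A m l) * Q (t - s) l j
                     + expm n A s i l * - fsum n (fun m => A l m * Q (t - s) m j))).
    - apply dfsum. intros l Hl. apply dmult.
      + apply expm_deriv_r; auto.
      + apply (drefl (fun u => Q u l j)). apply Q_deriv; auto.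
    - rewrite fsum_plus.
      rewrite (fsum_ext _ (fun l => fsum n (fun m => expm n A s i m * A m l) * Q (t - s) l j)
                 (fun l => fsum n (fun m => expm n A s i m * A m l * Q (t - s) l j)))
        by (intros; rewrite fsum_scal_r; auto).
      rewrite (fsum_ext _ (fun l => expm n A s i l * - fsum n (fun m => A l m * Q (t - s) m j))
                 (fun l => - fsum n (fun m => expm n A s i l * A l m * Q (t - s) m j))).
      2:{ intros k _. rewrite (fsum_ext _ (fun m => expm n A s i k * A k m * Q (t - s) m j)
             (fun m => expm n A s i k * (A k m * Q (t - s) m j))) by (intros; ring).
          rewrite fsum_scal. ring. }
      rewrite (fsum_ext _ (fun l => - fsum n (fun m => expm n A s i l * A l m * Q (t - s) m j))
                 (fun l => -1 * fsum n (fun m => expm n A s i l * A l m * Q (t - s) m j))) by (intros; ring).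
      rewrite fsum_scal, (fsum_swap n n (fun l m => expm n A s i l * A l m * Q (t - s) m j)). ring. }
  destruct (MVT_cor2 H (fun _ => 0) 0 t Ht (fun c0 _ => HD c0)) as [x [Hx _]].
  assert (H t = H 0) by lra.
  unfold H in H0. rewrite Rminus_diag, Rminus_0_r in H0.
  rewrite (fsum_ext _ (fun l => expm n A t i l * Q 0 l j) (fun l => expm n A t i l * idm l j)) in H0
    by (intros; rewrite Q_0; auto).
  rewrite (fsum_ext _ (fun l => expm n A 0 i l * Q t l j) (fun l => idm i l * Q t l j)) in H0
    by (intros; rewrite expm_0; auto).
  rewrite fsum_delta_r, fsum_delta_l in H0 by auto. exact H0.
Qed.

Lemma expm_nonneg t i j : 0 <= t -> (i < n)%nat -> (j < n)%nat -> 0 <= expm n A t i j.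
Proof.
  intros Ht Hi Hj. rewrite expm_eq_Q by auto. unfold Q.
  apply Rmult_le_pos; [left; apply exp_pos| apply expmB_nonneg; auto].
Qed.
End Pos.

Lemma Din_interior f df a b x : a < x < b -> D_in f df (fun s => a <= s <= b) x ->
  derivable_pt_lim f x (df x).
Proof.
  intros Hx HD eps Heps. destruct (HD eps Heps) as [alp [Halp H]].
  assert (Hd : 0 < Rmin alp (Rmin (x - a) (b - x))) by
    (repeat apply Rmin_pos; lra).
  exists (mkposreal _ Hd). intros h Hh Hlt. simpl in Hlt.
  assert (h1 : Rabs h < alp) by (eapply Rlt_le_trans; [apply Hlt| apply Rmin_l]).
  assert (h2 : Rabs h < x - a) by (eapply Rlt_le_trans; [apply Hlt| eapply Rle_trans; [apply Rmin_r| apply Rmin_l]]).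
  assert (h3 : Rabs h < b - x) by (eapply Rlt_le_trans; [apply Hlt| eapply Rle_trans; [apply Rmin_r| apply Rmin_r]]).
  pose proof (Rle_abs h). pose proof (Rle_abs (-h)). rewrite Rabs_Ropp in H1.
  specialize (H (x + h)). simpl in H. unfold R_dist in H.
  replace (x + h - x) with h in H by ring.
  apply H. split; [split; [lra| intro; apply Hh; lra]| auto].
Qed.

Lemma Mono f df a b : a < b ->
  (forall x, a <= x <= b -> D_in f df (fun s => a <= s <= b) x) ->
  (forall x, a <= x <= b -> 0 <= df x) -> f a <= f b.
Proof.
  intros Hab HD Hpos.
  assert (Hint : forall c d, a < c -> c < d -> d < b -> f c <= f d).
  { intros c d Hc Hcd Hd.
    destruct (MVT_cor2 f df c d Hcd) as [x [Hx Hx2]].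
    - intros y Hy. apply (Din_interior f df a b); [lra| apply HD; lra].
    - assert (0 <= df x) by (apply Hpos; lra). nra. }
  destruct (Rle_or_lt (f a) (f b)) as [|Hlt]; auto. exfalso.
  set (d := (f a - f b) / 3).
  assert (Hdp : d > 0) by (unfold d; lra).
  pose proof (cont_deriv _ _ _ _ (HD a ltac:(lra))) as Ca.
  pose proof (cont_deriv _ _ _ _ (HD b ltac:(lra))) as Cb.
  destruct (Ca d Hdp) as [al1 [Hal1 H1]]. destruct (Cb d Hdp) as [al2 [Hal2 H2]].
  set (c := a + Rmin al1 ((b - a) / 2) / 2).
  set (e := b - Rmin al2 ((b - a) / 2) / 2).
  assert (m1 : 0 < Rmin al1 ((b - a) / 2)) by (apply Rmin_pos; lra).
  assert (m2 : 0 < Rmin al2 ((b - a) / 2)) by (apply Rmin_pos; lra).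
  pose proof (Rmin_l al1 ((b - a) / 2)). pose proof (Rmin_r al1 ((b - a) / 2)).
  pose proof (Rmin_l al2 ((b - a) / 2)). pose proof (Rmin_r al2 ((b - a) / 2)).
  assert (Fc : Rabs (f c - f a) < d).
  { specialize (H1 c). simpl in H1. unfold R_dist in H1. apply H1.
    unfold c. split; [split; [lra| lra]|]. rewrite Rabs_right; lra. }
  assert (Fe : Rabs (f e - f b) < d).
  { specialize (H2 e). simpl in H2. unfold R_dist in H2. apply H2.
    unfold e. split; [split; [lra| lra]|]. rewrite Rabs_left; lra. }
  assert (f c <= f e) by (apply Hint; unfold c, e; lra).
  pose proof (Rle_abs (-(f c - f a))) as Q1. rewrite Rabs_Ropp in Q1.
  pose proof (Rle_abs (f e - f b)) as Q2. unfold d in *. lra.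
Qed.

Lemma Dfsum m (f : nat -> R -> R) (d : nat -> R -> R) D x :
  (forall l, (l < m)%nat -> D_in (f l) (d l) D x) ->
  D_in (fun s => fsum m (fun l => f l s)) (fun s => fsum m (fun l => d l s)) D x.
Proof.
  induction m; intros H; simpl.
  - apply Dconst.
  - apply (Dadd D (fun s => fsum m (fun l => d l s)) (d m) (fun s => fsum m (fun l => f l s)) (f m)).
    + apply IHm; intros; apply H; lia.
    + apply H; lia.
Qed.

Lemma cfsum m (f : nat -> R -> R) x :
  (forall l, (l < m)%nat -> continuity_pt (f l) x) ->
  continuity_pt (fun s => fsum m (fun l => f l s)) x.
Proof.
  induction m; intros H; simpl.
  - apply continuity_pt_const. intros u v; auto.
  - apply (continuity_pt_plus (fun s => fsum m (fun l => f l s)) (f m)).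
    + apply IHm; intros; apply H; lia.
    + apply H; lia.
Qed.

Lemma cmult f g x : continuity_pt f x -> continuity_pt g x -> continuity_pt (fun s => f s * g s) x.
Proof. intros; apply (continuity_pt_mult f g); auto. Qed.

Lemma cminus f g x : continuity_pt f x -> continuity_pt g x -> continuity_pt (fun s => f s - g s) x.
Proof. intros; apply (continuity_pt_minus f g); auto. Qed.

Lemma cconst (y x : R) : continuity_pt (fun _ => y) x.
Proof. apply continuity_pt_const. intros u v; auto. Qed.

Lemma idm_sym i j : idm i j = idm j i.
Proof. unfold idm. destruct (Nat.eq_dec i j), (Nat.eq_dec j i); congruence. Qed.

Lemma idm_nonneg i j : 0 <= idm i j.
Proof. unfold idm. destruct (Nat.eq_dec i j); lra. Qed.

Lemma vmat_form n (E J : Mat) lam j : (j < n)%nat ->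
  vmat n lam (msub (mmul n E J) idm) j =
  fsum n (fun i => lam i * fsum n (fun k => E i k * J k j)) - lam j.
Proof.
  intros Hj. unfold vmat, msub, mmul.
  rewrite (fsum_ext _ _ (fun i => lam i * fsum n (fun k => E i k * J k j) - lam i * idm i j)) by (intros; ring).
  rewrite fsum_minus, fsum_delta_r by auto. reflexivity.
Qed.

Lemma dot_form n (E J : Mat) lam x :
  dot n lam (mvec n E (mvec n J x)) - dot n lam x =
  fsum n (fun j => x j * vmat n lam (msub (mmul n E J) idm) j).
Proof.
  rewrite (fsum_ext _ (fun j => x j * vmat n lam (msub (mmul n E J) idm) j)
     (fun j => x j * fsum n (fun i => lam i * fsum n (fun k => E i k * J k j)) - lam j * x j))
    by (intros; rewrite vmat_form by auto; ring).
  rewrite fsum_minus. unfold dot at 2. f_equal.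
  unfold dot, mvec.
  transitivity (fsum n (fun i => fsum n (fun k => fsum n (fun j => lam i * E i k * J k j * x j)))).
  - apply fsum_ext; intros i _. rewrite <- fsum_scal. apply fsum_ext; intros k _.
    rewrite <- fsum_scal, <- fsum_scal. apply fsum_ext; intros; ring.
  - transitivity (fsum n (fun j => fsum n (fun i => fsum n (fun k => lam i * E i k * J k j * x j)))).
    + rewrite (fsum_swap n n (fun j i => fsum n (fun k => lam i * E i k * J k j * x j))).
      apply fsum_ext; intros i _. apply fsum_swap.
    + apply fsum_ext; intros j _. rewrite <- fsum_scal. apply fsum_ext; intros i _.
      rewrite <- fsum_scal, <- fsum_scal. apply fsum_ext; intros; ring.
Qed.

Lemma unif (F : R -> nat -> R) a b n : a <= b ->
  (forall j, (j < n)%nat -> forall t, a <= t <= b -> continuity_pt (fun s => F s j) t) ->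
  (forall t, a <= t <= b -> forall j, (j < n)%nat -> F t j < 0) ->
  exists m : nat -> R, (forall j, (j < n)%nat -> m j < 0) /\
     (forall t, a <= t <= b -> forall j, (j < n)%nat -> F t j <= m j).
Proof.
  intros Hab Hc Hn.
  exists (fun j => epsilon (inhabits 0) (fun v => v < 0 /\ forall t, a <= t <= b -> F t j <= v)).
  assert (forall j, (j < n)%nat -> let v := epsilon (inhabits 0) (fun v => v < 0 /\ forall t, a <= t <= b -> F t j <= v) in
            v < 0 /\ forall t, a <= t <= b -> F t j <= v).
  { intros j Hj. apply epsilon_spec.
    destruct (continuity_ab_maj (fun s => F s j) a b Hab (Hc j Hj)) as [Mx [HM HMx]].
    exists (F Mx j). split; auto. }
  split; intros; [apply H| apply H]; auto.
Qed.

Lemma dscal f c x l : derivable_pt_lim f x l -> derivable_pt_lim (fun s => c * f s) x (c * l).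
Proof. intros H. replace (c * l) with (0 * f x + c * l) by ring.
  apply (dmult (fun _ => c) f). apply derivable_pt_lim_const. auto. Qed.

Lemma F_cont n A J lam j t : (j < n)%nat ->
  continuity_pt (fun s => vmat n lam (msub (mmul n (expm n A s) J) idm) j) t.
Proof.
  intros Hj. unfold vmat, msub, mmul.
  apply (cfsum n (fun i s => lam i * (fsum n (fun k => expm n A s i k * J k j) - idm i j))).
  intros i Hi. apply cmult; [apply cconst|]. apply cminus; [|apply cconst].
  apply (cfsum n (fun k s => expm n A s i k * J k j)). intros k Hk.
  apply cmult; [apply expm_cont; auto| apply cconst].
Qed.

Theorem theorem5 (n : nat) (A J : Mat) (Tmin Tmax : R)
  (hA : Metzler n A) (hJ : nonneg_mat n J)
  (hTmin : 0 < Tmin) (hT : Tmin <= Tmax) :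
  ( (* (a) *)
    (exists lam mu : Vec, pos_vec n lam /\ pos_vec n mu /\
      forall x : Vec, nonneg_vec n x ->
      forall theta, Tmin <= theta <= Tmax ->
        dot n lam (mvec n (expm n A theta) (mvec n J x)) - dot n lam x
          <= - dot n mu x)
  <->
    (* (b) *)
    (exists lam : Vec, pos_vec n lam /\
      forall theta, Tmin <= theta <= Tmax ->
      forall j, (j < n)%nat ->
        vmat n lam (msub (mmul n (expm n A theta) J) idm) j < 0) )
  /\
  ( (* (b) *)
    (exists lam : Vec, pos_vec n lam /\
      forall theta, Tmin <= theta <= Tmax ->
      forall j, (j < n)%nat ->
        vmat n lam (msub (mmul n (expm n A theta) J) idm) j < 0)
  <->
    (* (c) *)
    (exists (zeta dzeta : nat -> R -> R) (eps : R),
      (forall i, (i < n)%nat -> forall tau, 0 <= tau <= Tmax ->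
         D_in (zeta i) (dzeta i) (fun s => 0 <= s <= Tmax) tau) /\
      (forall i, (i < n)%nat -> 0 < zeta i 0) /\
      0 < eps /\
      (forall tau, 0 <= tau <= Tmax -> forall j, (j < n)%nat ->
         vmat n (fun i => zeta i tau) A j - dzeta j tau <= 0) /\
      (forall theta, Tmin <= theta <= Tmax -> forall j, (j < n)%nat ->
         vmat n (fun i => zeta i theta) J j - zeta j 0 + eps <= 0)) ).
Proof.
  set (F := fun lam t j => vmat n lam (msub (mmul n (expm n A t) J) idm) j).
  assert (Hunif : forall lam, (forall t, Tmin <= t <= Tmax -> forall j, (j < n)%nat -> F lam t j < 0) ->
     exists m : nat -> R, (forall j, (j < n)%nat -> m j < 0) /\
     (forall t, Tmin <= t <= Tmax -> forall j, (j < n)%nat -> F lam t j <= m j)).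
  { intros lam H. apply unif; auto. intros j Hj t _. apply F_cont; auto. }
  split; split.
  -
    intros [lam [mu [Hl [Hm H]]]]. exists lam. split; auto. intros t Ht j Hj.
    specialize (H (fun k => idm k j) (fun k _ => idm_nonneg k j) t Ht).
    rewrite dot_form in H.
    rewrite (fsum_ext _ _ (fun k => idm j k * vmat n lam (msub (mmul n (expm n A t) J) idm) k)) in H
      by (intros; rewrite idm_sym; auto).
    rewrite fsum_delta_l in H by auto. unfold dot in H. rewrite fsum_delta_r in H by auto.
    specialize (Hm j Hj). lra.
  -
    intros [lam [Hl Hb]]. destruct (Hunif lam Hb) as [m [Hm1 Hm2]].
    exists lam, (fun j => - m j). split; [auto| split].
    { intros j Hj. specialize (Hm1 j Hj). lra. }
    intros x Hx t Ht. rewrite dot_form. unfold dot.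
    rewrite (fsum_ext _ (fun i => - m i * x i) (fun i => -1 * (x i * m i))) by (intros; ring).
    rewrite fsum_scal. replace (- (-1 * fsum n (fun i => x i * m i))) with (fsum n (fun i => x i * m i)) by ring.
    apply fsum_le. intros j Hj. apply Rmult_le_compat_l; [apply Hx; auto|]. apply (Hm2 t Ht j Hj).
  -
    intros [lam [Hl Hb]]. destruct (Hunif lam Hb) as [m [Hm1 Hm2]].
    set (S := fsum n (fun j => / (- m j))).
    assert (HS : forall j, (j < n)%nat -> / (- m j) <= S).
    { intros j Hj. apply (fsum_term_le n (fun j => / (- m j))); auto.
      intros i Hi. left. apply Rinv_0_lt_compat. specialize (Hm1 i Hi). lra. }
    assert (HS0 : 0 <= S).
    { apply fsum_nonneg. intros i Hi. left. apply Rinv_0_lt_compat. specialize (Hm1 i Hi). lra. }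
    exists (fun i t => fsum n (fun k => lam k * expm n A t k i)).
    exists (fun i t => fsum n (fun k => lam k * fsum n (fun l => expm n A t k l * A l i))).
    exists (/ (1 + S)).
    split; [| split; [| split; [| split]]].
    + intros i Hi t Ht. apply (D_in_imp _ _ no_cond). { intros; exact I. }
      apply derivable_pt_lim_D_in.
      apply (dfsum n (fun k t => lam k * expm n A t k i)). intros k Hk.
      apply dscal. apply expm_deriv_r; auto.
    + intros i Hi. rewrite (fsum_ext _ _ (fun k => lam k * idm k i)) by (intros; rewrite expm_0; auto).
      rewrite fsum_delta_r by auto. apply Hl; auto.
    + apply Rinv_0_lt_compat. lra.
    + intros t Ht j Hj. unfold vmat.
      rewrite (fsum_ext _ (fun i => fsum n (fun k => lam k * expm n A t k i) * A i j)
                (fun i => fsum n (fun k => lam k * expm n A t k i * A i j)))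
        by (intros; rewrite fsum_scal_r; auto).
      rewrite fsum_swap.
      rewrite (fsum_ext _ (fun k => lam k * fsum n (fun l => expm n A t k l * A l j))
                (fun k => fsum n (fun l => lam k * expm n A t k l * A l j))).
      2:{ intros. rewrite <- fsum_scal. apply fsum_ext; intros; ring. }
      lra.
    + intros t Ht j Hj.
      assert (Hv : vmat n (fun i => fsum n (fun k => lam k * expm n A t k i)) J j =
                   fsum n (fun i => lam i * fsum n (fun k => expm n A t i k * J k j))).
      { unfold vmat.
        rewrite (fsum_ext _ (fun i => fsum n (fun k => lam k * expm n A t k i) * J i j)
                (fun i => fsum n (fun k => lam k * expm n A t k i * J i j)))
          by (intros; rewrite fsum_scal_r; auto).
        rewrite fsum_swap. apply fsum_ext; intros. rewrite <- fsum_scal. apply fsum_ext; intros; ring. }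
      rewrite Hv.
      rewrite (fsum_ext _ (fun k => lam k * expm n A 0 k j) (fun k => lam k * idm k j))
        by (intros; rewrite expm_0; auto).
      rewrite fsum_delta_r by auto.
      pose proof (Hm2 t Ht j Hj) as Hf. unfold F in Hf. rewrite vmat_form in Hf by auto.
      assert (/ (1 + S) <= - m j).
      { specialize (Hm1 j Hj). specialize (HS j Hj).
        replace (- m j) with (/ / (- m j)) by (field; lra).
        apply Rinv_le_contravar; [apply Rinv_0_lt_compat; lra| lra]. }
      lra.
  -
    intros [zeta [dzeta [eps [HD [Hz0 [Heps [HAz HJz]]]]]]].
    exists (fun i => zeta i 0). split; [intros i Hi; apply Hz0; auto|].
    intros t Ht j Hj.
    assert (C : forall k, (k < n)%nat -> fsum n (fun i => zeta i 0 * expm n A t i k) <= zeta k t).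
    { intros k Hk.
      set (h := fun s => fsum n (fun l => zeta l s * expm n A (t - s) l k)).
      set (dh := fun s => fsum n (fun l => dzeta l s * expm n A (t - s) l k +
                          zeta l s * - fsum n (fun m => A l m * expm n A (t - s) m k))).
      assert (Hmono : h 0 <= h t).
      { apply (Mono h dh 0 t); [lra| |].
        - intros x Hx. unfold h, dh.
          apply (Dfsum n (fun l s => zeta l s * expm n A (t - s) l k)
                   (fun l s => dzeta l s * expm n A (t - s) l k +
                          zeta l s * - fsum n (fun m => A l m * expm n A (t - s) m k))).
          intros l Hl.
          apply (Dmult _ (dzeta l) (fun s => - fsum n (fun m => A l m * expm n A (t - s) m k))
                   (zeta l) (fun s => expm n A (t - s) l k)).
          + apply (D_in_imp _ _ (fun s => 0 <= s <= Tmax)). { intros; lra. }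
            apply HD; auto. lra.
          + apply (D_in_imp _ _ no_cond). { intros; exact I. }
            apply derivable_pt_lim_D_in.
            apply (drefl (fun u => expm n A u l k)). apply expm_deriv_l; auto.
        - intros x Hx. unfold dh. rewrite fsum_plus.
          rewrite (fsum_ext _ (fun l => zeta l x * - fsum n (fun m => A l m * expm n A (t - x) m k))
                    (fun l => -1 * fsum n (fun m => zeta l x * A l m * expm n A (t - x) m k))).
          2:{ intros l _. rewrite (fsum_ext _ (fun m => zeta l x * A l m * expm n A (t - x) m k)
                 (fun m => zeta l x * (A l m * expm n A (t - x) m k))) by (intros; ring).
              rewrite fsum_scal. ring. }
          rewrite fsum_scal, fsum_swap.
          rewrite (fsum_ext _ (fun m => fsum n (fun l => zeta l x * A l m * expm n A (t - x) m k))
                    (fun m => vmat n (fun i => zeta i x) A m * expm n A (t - x) m k))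
            by (intros; unfold vmat; rewrite fsum_scal_r; auto).
          replace (fsum n (fun l => dzeta l x * expm n A (t - x) l k) +
                   -1 * fsum n (fun m => vmat n (fun i => zeta i x) A m * expm n A (t - x) m k))
            with (fsum n (fun m => (dzeta m x - vmat n (fun i => zeta i x) A m) * expm n A (t - x) m k)).
          2:{ rewrite (fsum_ext _ _ (fun m => dzeta m x * expm n A (t - x) m k -
                 vmat n (fun i => zeta i x) A m * expm n A (t - x) m k)) by (intros; ring).
              rewrite fsum_minus. ring. }
          apply fsum_nonneg. intros m Hm. apply Rmult_le_pos.
          + specialize (HAz x ltac:(lra) m Hm). lra.
          + apply expm_nonneg; auto. lra. }
      unfold h in Hmono.
      replace (t - 0) with t in Hmono by ring. rewrite Rminus_diag in Hmono.
      rewrite (fsum_ext _ (fun l => zeta l t * expm n A 0 l k) (fun l => zeta l t * idm l k)) in Hmono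
        by (intros; rewrite expm_0; auto).
      rewrite fsum_delta_r in Hmono by auto. exact Hmono. }
    rewrite vmat_form by auto.
    assert (Hg : fsum n (fun i => zeta i 0 * fsum n (fun k => expm n A t i k * J k j)) =
                 fsum n (fun k => fsum n (fun i => zeta i 0 * expm n A t i k) * J k j)).
    { rewrite (fsum_ext _ (fun i => zeta i 0 * fsum n (fun k => expm n A t i k * J k j))
                 (fun i => fsum n (fun k => zeta i 0 * expm n A t i k * J k j))).
      2:{ intros. rewrite <- fsum_scal. apply fsum_ext; intros; ring. }
      rewrite fsum_swap. apply fsum_ext; intros. rewrite fsum_scal_r. auto. }
    rewrite Hg.
    assert (fsum n (fun k => fsum n (fun i => zeta i 0 * expm n A t i k) * J k j) <=
            vmat n (fun i => zeta i t) J j).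
    { unfold vmat. apply fsum_le. intros k Hk. apply Rmult_le_compat_r; [apply hJ; auto| apply C; auto]. }
    specialize (HJz t Ht j Hj). lra.
Qed.
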